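(* Let $f(z)=\sum_{n=0}^{\infty}a_{n}z^{n}$ be an entire function with $a_{0}\cdot a_{n}>0$ for all $n\ge0$, of order $\rho(f)=\limsup_{n\to\infty}\frac{n\log n}{-\log|a_{n}|}<1$, having a nonzero root, and write $\frac{f(z)}{f(0)}=\prod_{n=1}^{\infty}\left(1+\frac{z}{\lambda_{n}}\right)$ with $\sum_{n}1/|\lambda_n|<\infty$, where $\{-\lambda_n\}$ are the zeros of $f$ with multiplicity. Assume there exists $\beta_{0}\in(0,1)$ with $\Re(\lambda_{n})\ge\beta_{0}|\lambda_{n}|>0$ for all $n\in\mathbb{N}$, and let $\Theta(t)=\sum_{n=1}^{\infty}e^{-\lambda_{n}t}$ for $t>0$. Then the sequence $\{\lambda_{n}\}_{n=1}^{\infty}$ is positive (all $\lambda_n>0$) if and only if $\Theta$ is completely monotonic on $(0,\infty)$.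
   Context: A function $g\in C^\infty(0,\infty)$ is completely monotonic on $(0,\infty)$ if $(-1)^{k}g^{(k)}(x)\ge 0$ for all $x>0$ and all $k\in\mathbb{N}_0$. *)

(* Defs.v *)
From Stdlib Require Import Reals.
From Coquelicot Require Import Coquelicot.
Open Scope R_scope.

Definition cexp (z : C) : C :=
  (exp (Re z) * cos (Im z), exp (Re z) * sin (Im z)).

Fixpoint part_prod (lam : nat -> C) (z : C) (N : nat) : C :=
  match N with
  | O => RtoC 1
  | S N' => Cmult (part_prod lam z N') (Cplus (RtoC 1) (Cdiv z (lam N')))
  end.

Definition Theta (lam : nat -> C) (t : R) : C :=
  (Series (fun n => Re (cexp (Copp (Cmult (lam n) (RtoC t))))),
   Series (fun n => Im (cexp (Copp (Cmult (lam n) (RtoC t)))))).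

Definition completely_monotonic (g : R -> R) : Prop :=
  (forall (k : nat) (x : R), 0 < x -> ex_derive_n g k x) /\
  (forall (k : nat) (x : R), 0 < x -> 0 <= (-1) ^ k * Derive_n g k x).

(* complete monotonicity of a complex-valued function of a real variable:
   (-1)^k g^(k)(x) >= 0 in C means it is real and nonnegative; since
   g^(k) = (Re g)^(k) + i (Im g)^(k), this unfolds to: Im g = 0 on (0,oo)
   and Re g completely monotonic. *)
Definition completely_monotonic_C (g : R -> C) : Prop :=
  (forall x : R, 0 < x -> Im (g x) = 0) /\
  completely_monotonic (fun x => Re (g x)).

(* Main.v *)
From Stdlib Require Import Lra Lia ZArith Classical FunctionalExtensionality.
Require Import Defs.
From Stdlib Require Import Reals.
From Coquelicot Require Import Coquelicot.
Open Scope R_scope.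
Open Scope R_scope.

Lemma exp_le_exp x y : x <= y -> exp x <= exp y.
Proof. intros H. destruct (Rle_lt_or_eq_dec _ _ H). apply Rlt_le, exp_increasing; auto. subst; lra. Qed.

Definition T (k : nat) (l : C) (t : R) : R :=
  Cmod l ^ k * exp (- (Re l * t)) * cos (INR k * atan (Im l / Re l) - Im l * t).

Lemma Cmod_polar (l : C) : 0 < Re l ->
  Cmod l * cos (atan (Im l / Re l)) = Re l /\ Cmod l * sin (atan (Im l / Re l)) = Im l.
Proof.
  intros Ha. destruct l as [a b]. unfold Re, Im in *; simpl in *.
  assert (Hs : 0 < sqrt (1 + (b / a)²)).
  { apply sqrt_lt_R0. pose proof (Rle_0_sqr (b/a)). lra. }
  assert (Hc : Cmod (a, b) = a * sqrt (1 + (b / a)²)).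
  { unfold Cmod; simpl.
    replace (a * (a * 1) + b * (b * 1)) with ((a * a) * (1 + (b / a)²)) by (unfold Rsqr; field; lra).
    rewrite sqrt_mult_alt by nra. rewrite sqrt_square by lra. auto. }
  rewrite cos_atan, sin_atan, Hc. split; field; lra.
Qed.

Lemma T_derive (k : nat) (l : C) (t : R) : 0 < Re l ->
  is_derive (T k l) t (- T (S k) l t).
Proof.
  intros Ha. destruct (Cmod_polar l Ha) as [H1 H2].
  set (A := atan (Im l / Re l)) in *.
  unfold T. fold A. auto_derive; auto.
  rewrite S_INR.
  replace ((INR k + 1) * A - Im l * t) with ((INR k * A + - (Im l * t)) + A) by ring.
  rewrite (cos_plus (INR k * A + - (Im l * t)) A). simpl pow.
  set (c := cos (INR k * A + - (Im l * t))).
  set (s := sin (INR k * A + - (Im l * t))).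
  replace (Cmod l * Cmod l ^ k * exp (- (Re l * t)) * (c * cos A - s * sin A))
    with (Cmod l ^ k * exp (- (Re l * t)) * (c * (Cmod l * cos A) - s * (Cmod l * sin A))) by ring.
  rewrite H1, H2. ring.
Qed.

Lemma T_bound (k : nat) (l : C) (t : R) :
  Rabs (T k l t) <= Cmod l ^ k * exp (- (Re l * t)).
Proof.
  unfold T. rewrite Rabs_mult. 
  rewrite (Rabs_pos_eq (Cmod l ^ k * exp (- (Re l * t)))).
  2: { apply Rmult_le_pos. apply pow_le, Cmod_ge_0. apply Rlt_le, exp_pos. }
  rewrite <- (Rmult_1_r (Cmod l ^ k * exp (- (Re l * t)))) at 2.
  apply Rmult_le_compat_l. apply Rmult_le_pos. apply pow_le, Cmod_ge_0. apply Rlt_le, exp_pos.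
  apply Rabs_le. apply COS_bound.
Qed.

Lemma pow_exp_bound (n : nat) (x : R) : 0 <= x -> x ^ n <= INR (Factorial.fact n) * exp x.
Proof.
  intros Hx. pose proof (exp_ge_taylor x n Hx).
  assert (x ^ n / INR (Factorial.fact n) <= sum_f_R0 (fun k => x ^ k / INR (Factorial.fact k)) n).
  { destruct n. simpl. lra. rewrite tech5.
    assert (0 <= sum_f_R0 (fun k => x ^ k / INR (Factorial.fact k)) n).
    { apply cond_pos_sum. intros. apply Rmult_le_pos. apply pow_le; auto.
      apply Rlt_le, Rinv_0_lt_compat, INR_fact_lt_0. }
    lra. }
  pose proof (INR_fact_lt_0 n).
  apply (Rmult_le_reg_r (/ INR (Factorial.fact n))). apply Rinv_0_lt_compat; auto.
  replace (INR (Factorial.fact n) * exp x * / INR (Factorial.fact n)) with (exp x) by (field; lra).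
  unfold Rdiv in H0. lra.
Qed.

Lemma decay_bound (k : nat) (rho bc : R) : 0 < rho -> 0 < bc ->
  rho ^ k * exp (- (bc * rho)) <= INR (Factorial.fact (S k)) / bc ^ (S k) / rho.
Proof.
  intros Hr Hb. pose proof (pow_exp_bound (S k) (bc * rho)) as H.
  assert (0 <= bc * rho) by nra. specialize (H H0).
  rewrite Rpow_mult_distr in H.
  pose proof (exp_pos (bc * rho)). pose proof (pow_lt bc (S k) Hb).
  assert (exp (- (bc * rho)) = / exp (bc * rho)) by (rewrite exp_Ropp; auto).
  rewrite H3.
  apply (Rmult_le_reg_r (exp (bc * rho) * bc ^ S k * rho)). 
  apply Rmult_lt_0_compat; auto. apply Rmult_lt_0_compat; auto.
  replace (rho ^ k * / exp (bc * rho) * (exp (bc * rho) * bc ^ S k * rho)) with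
    (bc ^ S k * rho ^ S k) by (simpl; field; lra).
  replace (INR (Factorial.fact (S k)) / bc ^ S k / rho * (exp (bc * rho) * bc ^ S k * rho))
    with (INR (Factorial.fact (S k)) * exp (bc * rho)) by (field; lra).
  lra.
Qed.
Lemma Mtest (u : nat -> R -> R) (M : nat -> R) (D : R -> Prop) :
  (forall n x, D x -> Rabs (u n x) <= M n) -> ex_series M ->
  CVU_dom (fun N x => sum_n (fun n => u n x) N) D.
Proof.
  intros Hb HM eps.
  pose proof (Series_correct _ HM) as HS.
  assert (HS2 : is_lim_seq (sum_n M) (Series M)) by exact HS. apply is_lim_seq_spec in HS2. clear HS. rename HS2 into HS. destruct (HS eps) as [N0 HN0].
  exists N0. intros N HN x Hx.
  assert (Hex : ex_series (fun n => Rabs (u n x))).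
  { apply (@ex_series_le R_AbsRing R_CompleteNormedModule _ M); auto. intros n. unfold norm; simpl. unfold abs; simpl.
    rewrite Rabs_Rabsolu. auto. }
  assert (Hex' : ex_series (fun n => u n x)) by (apply ex_series_Rabs; auto).
  change (real (Lim_seq (fun n0 => sum_n (fun n => u n x) n0))) with (Series (fun n => u n x)).
  rewrite (Series_incr_n (fun n => u n x) (S N)) by (auto; lia).
  rewrite (Series_incr_n M (S N)) in HN0 by (auto; lia).
  specialize (HN0 N HN). simpl pred in *. rewrite sum_n_Reals.
  rewrite sum_n_Reals in HN0.
  replace (sum_f_R0 (fun n => u n x) N - (sum_f_R0 (fun n => u n x) N + Series (fun k => u (S N + k)%nat x)))
    with (- Series (fun k => u (S N + k)%nat x)) by ring.
  rewrite Rabs_Ropp.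
  replace (sum_f_R0 M N - (sum_f_R0 M N + Series (fun k => M (S N + k)%nat))) with
    (- Series (fun k => M (S N + k)%nat)) in HN0 by ring.
  rewrite Rabs_Ropp in HN0.
  eapply Rle_lt_trans; [| eapply Rle_lt_trans; [apply Rle_abs | exact HN0]].
  eapply Rle_trans. apply Series_Rabs.
  apply (ex_series_incr_n (fun n => Rabs (u n x)) (S N)) in Hex. auto.
  apply Series_le. intros n. split. apply Rabs_pos. apply Hb; auto.
  apply (ex_series_incr_n M (S N)) in HM. auto.
Qed.

Lemma fin_argmax (Q : nat -> Prop) (h : nat -> R) N :
  (exists n, (n < N)%nat /\ Q n) ->
  exists m, (m < N)%nat /\ Q m /\ forall n, (n < N)%nat -> Q n -> h n <= h m.
Proof.
  induction N as [|N IH]; intros [n0 [Hn0 HQ0]].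
  - lia.
  - destruct (classic (exists n, (n < N)%nat /\ Q n)) as [Hex|Hnex].
    + destruct (IH Hex) as [m [Hm [HQm Hmax]]].
      destruct (classic (Q N)) as [HQN|HQN].
      * destruct (Rle_lt_dec (h N) (h m)) as [Hle|Hlt].
        -- exists m. split. lia. split. auto. intros n Hn HQn.
           destruct (Nat.eq_dec n N). subst; auto. apply Hmax; auto. lia.
        -- exists N. split. lia. split. auto. intros n Hn HQn.
           destruct (Nat.eq_dec n N). subst; lra. specialize (Hmax n ltac:(lia) HQn). lra.
      * exists m. split. lia. split. auto. intros n Hn HQn.
        destruct (Nat.eq_dec n N). subst; contradiction. apply Hmax; auto. lia.
    + exists N. assert (n0 = N).
      { destruct (Nat.eq_dec n0 N); auto. exfalso. apply Hnex. exists n0. split; auto. lia. }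
      subst. split. lia. split. auto. intros n Hn HQn.
      destruct (Nat.eq_dec n N). subst; lra. exfalso. apply Hnex. exists n. split; auto. lia.
Qed.

Lemma fin_strict (Q : nat -> Prop) (h : nat -> R) B N :
  (forall n, (n < N)%nat -> Q n -> h n < B) ->
  exists r, r < B /\ forall n, (n < N)%nat -> Q n -> h n <= r.
Proof.
  intros H. destruct (classic (exists n, (n < N)%nat /\ Q n)) as [Hex|Hnex].
  - destruct (fin_argmax Q h N Hex) as [m [Hm [HQm Hmax]]].
    exists (h m). split. apply H; auto. auto.
  - exists (B - 1). split. lra. intros n Hn HQn. exfalso. apply Hnex. eauto.
Qed.

Lemma cos_odd (z : Z) : cos (IZR (2 * z + 1) * PI) = -1.
Proof.
  destruct (Z_le_gt_dec 0 z) as [Hz|Hz].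
  - rewrite <- (Z2Nat.id z Hz). rewrite plus_IZR, mult_IZR, <- INR_IZR_INZ.
    replace ((2 * INR (Z.to_nat z) + 1) * PI) with (PI + 2 * INR (Z.to_nat z) * PI) by ring.
    rewrite cos_period. apply cos_PI.
  - rewrite <- cos_neg.
    assert (Hz' : (0 <= - z - 1)%Z) by lia.
    replace (- (IZR (2 * z + 1) * PI)) with (PI + 2 * IZR (- z - 1) * PI)
      by (rewrite !minus_IZR, plus_IZR, mult_IZR, opp_IZR; ring).
    rewrite <- (Z2Nat.id (- z - 1) Hz'). rewrite <- INR_IZR_INZ.
    rewrite cos_period. apply cos_PI.
Qed.

Lemma nat_above (r : R) : exists D : nat, (0 < D)%nat /\ r < INR D.
Proof.
  destruct (archimed (Rabs r)) as [H1 H2].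
  assert (0 <= Rabs r) by apply Rabs_pos.
  assert (Hp : (0 <= up (Rabs r))%Z) by (apply le_IZR; lra).
  exists (S (Z.to_nat (up (Rabs r)))). split. lia.
  rewrite S_INR, INR_IZR_INZ, Z2Nat.id by auto.
  pose proof (Rle_abs r). lra.
Qed.

Lemma odd_dense (A B : R) : A < B ->
  exists (D : nat) (z : Z), (0 < D)%nat /\ A < PI * IZR (2 * z + 1) / INR D < B.
Proof.
  intros HAB. pose proof PI_RGT_0 as Hpi.
  destruct (nat_above (2 * PI / (B - A))) as [D [HD HDr]].
  assert (HD' : 0 < INR D) by (apply lt_0_INR; auto).
  assert (Hgap : 2 * PI < INR D * (B - A)).
  { apply (Rmult_lt_compat_r (B - A)) in HDr; [|lra].
    replace (2 * PI / (B - A) * (B - A)) with (2 * PI) in HDr by (field; lra). lra. }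
  set (x := A * INR D / PI).
  destruct (archimed x) as [Hu1 Hu2].
  assert (Hq : exists z : Z, x < IZR (2 * z + 1) <= x + 2).
  { destruct (Z.Even_or_Odd (up x)) as [[m Hm]|[m Hm]].
    - exists m. rewrite plus_IZR. rewrite Hm in Hu1, Hu2. rewrite mult_IZR in *. lra.
    - exists m. rewrite Hm in Hu1, Hu2. lra. }
  destruct Hq as [z [Hz1 Hz2]].
  exists D, z. split; auto.
  unfold x in *. split.
  - apply (Rmult_lt_reg_r (INR D / PI)). apply Rdiv_lt_0_compat; lra.
    replace (PI * IZR (2 * z + 1) / INR D * (INR D / PI)) with (IZR (2 * z + 1)) by (field; lra).
    replace (A * (INR D / PI)) with (A * INR D / PI) by (field; lra). lra.
  - apply (Rmult_lt_reg_r (INR D / PI)). apply Rdiv_lt_0_compat; lra.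
    replace (PI * IZR (2 * z + 1) / INR D * (INR D / PI)) with (IZR (2 * z + 1)) by (field; lra).
    assert (A * INR D / PI + 2 < B * (INR D / PI)).
    { apply (Rmult_lt_reg_r PI); auto.
      replace ((A * INR D / PI + 2) * PI) with (A * INR D + 2 * PI) by (field; lra).
      replace (B * (INR D / PI) * PI) with (B * INR D) by (field; lra). nra. }
    lra.
Qed.

Lemma exp_INR_mult (k : nat) (x : R) : exp (INR k * x) = exp x ^ k.
Proof.
  induction k. simpl. rewrite Rmult_0_l. apply exp_0.
  rewrite S_INR. replace ((INR k + 1) * x) with (x + INR k * x) by ring.
  rewrite exp_plus, IHk. simpl. ring.
Qed.

Lemma Cmod_sq (l : C) : Cmod l ^ 2 = Re l ^ 2 + Im l ^ 2.
Proof.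
  unfold Cmod. rewrite pow2_sqrt. reflexivity.
  destruct l; simpl. nra.
Qed.

Definition phi (l : C) (tau : R) := Cmod l * exp (- (Re l * tau)).

Lemma phi_pow (l : C) k tau :
  Cmod l ^ k * exp (- (Re l * (INR k * tau))) = phi l tau ^ k.
Proof.
  unfold phi. rewrite Rpow_mult_distr. f_equal.
  rewrite <- exp_INR_mult. f_equal. ring.
Qed.

Lemma phi_shift (l : C) tau0 tau :
  phi l tau = phi l tau0 * exp (- (Re l * (tau - tau0))).
Proof.
  unfold phi. rewrite Rmult_assoc, <- exp_plus. f_equal. f_equal. ring.
Qed.

Lemma sum_ind n1 c N :
  sum_f_R0 (fun n => if Nat.eq_dec n n1 then c else 0) N = if le_lt_dec n1 N then c else 0.
Proof.
  induction N as [|N IH].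
  - replace (sum_f_R0 (fun n => if Nat.eq_dec n n1 then c else 0) 0) with
      (if Nat.eq_dec 0 n1 then c else 0) by reflexivity.
    destruct (Nat.eq_dec 0 n1); destruct (le_lt_dec n1 0); auto; lia.
  - rewrite tech5. rewrite IH.
    destruct (Nat.eq_dec (S N) n1); destruct (le_lt_dec n1 N); destruct (le_lt_dec n1 (S N));
      try lia; lra.
Qed.

Lemma is_series_ind n1 c : is_series (fun n => if Nat.eq_dec n n1 then c else 0) c.
Proof.
  change (is_lim_seq (sum_n (fun n => if Nat.eq_dec n n1 then c else 0)) c).
  apply (is_lim_seq_ext_loc (fun _ => c)).
  - exists n1. intros N HN. rewrite sum_n_Reals, sum_ind.
    destruct (le_lt_dec n1 N); auto; lia.
  - apply is_lim_seq_const.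
Qed.

Lemma Series_zero : Series (fun _ => 0) = 0.
Proof.
  rewrite (Series_ext (fun _ => 0) (fun n => 0 * 0)) by (intros; ring).
  etransitivity. apply (Series_scal_l 0 (fun _ => 0)). ring.
Qed.

Definition G (lam : nat -> C) (k : nat) (t : R) : R := Series (fun n => T k (lam n) t).

Section Lam.
Variable lam : nat -> C.
Variable b0 : R.
Hypothesis Hb0 : 0 < b0.
Hypothesis Hb : forall n, b0 * Cmod (lam n) <= Re (lam n) /\ 0 < b0 * Cmod (lam n).
Hypothesis Hser : ex_series (fun n => / Cmod (lam n)).

Lemma rho_pos n : 0 < Cmod (lam n).
Proof. destruct (Hb n). nra. Qed.
Lemma re_pos n : 0 < Re (lam n).
Proof. destruct (Hb n). lra. Qed.

Definition Kc (k : nat) (c : R) := INR (Factorial.fact (S k)) / (b0 * c) ^ (S k).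

Lemma exp_dec_bound k c t n : 0 < c -> c <= t ->
  Cmod (lam n) ^ k * exp (- (Re (lam n) * t)) <= Kc k c * / Cmod (lam n).
Proof.
  intros Hc Hct. pose proof (rho_pos n). destruct (Hb n) as [H1 H2].
  apply Rle_trans with (Cmod (lam n) ^ k * exp (- ((b0 * c) * Cmod (lam n)))).
  - apply Rmult_le_compat_l. apply pow_le; lra.
    apply exp_le_exp.
    assert (b0 * c * Cmod (lam n) <= Re (lam n) * t).
    { apply Rle_trans with (b0 * Cmod (lam n) * t). nra. apply Rmult_le_compat_r; lra. }
    lra.
  - pose proof (decay_bound k (Cmod (lam n)) (b0 * c) H ltac:(nra)) as D.
    unfold Kc. unfold Rdiv in *. exact D.
Qed.

Lemma term_bound k c t n : 0 < c -> c <= t ->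
  Rabs (T k (lam n) t) <= Kc k c * / Cmod (lam n).
Proof.
  intros. eapply Rle_trans. apply T_bound. apply exp_dec_bound; auto.
Qed.

Lemma ex_series_K k c : ex_series (fun n => Kc k c * / Cmod (lam n)).
Proof. apply (ex_series_scal_l (Kc k c) _ Hser). Qed.

Lemma ex_series_T k t : 0 < t -> ex_series (fun n => T k (lam n) t).
Proof.
  intros Ht. apply ex_series_Rabs.
  apply (@ex_series_le R_AbsRing R_CompleteNormedModule _ (fun n => Kc k t * / Cmod (lam n))).
  - intros n. unfold norm; simpl. unfold abs; simpl. rewrite Rabs_Rabsolu.
    apply term_bound; lra.
  - apply ex_series_K.
Qed.

Lemma T_ex_derive k l x : 0 < Re l -> ex_derive (T k l) x.
Proof. intros H. eexists. apply T_derive; auto. Qed.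

Lemma sumT_derive k N x :
  is_derive (fun y => sum_n (fun n => T k (lam n) y) N) x (sum_n (fun n => - T (S k) (lam n) x) N).
Proof.
  apply (is_derive_sum_n (fun n y => T k (lam n) y)). intros. apply T_derive, re_pos.
Qed.

Lemma G_derive k t : 0 < t -> is_derive (G lam k) t (- G lam (S k) t).
Proof.
  intros Ht.
  set (c := t / 2).
  set (fn := fun N x => sum_n (fun n => T k (lam n) x) N).
  assert (Hc : 0 < c) by (unfold c; lra).
  assert (HD : forall N x, Derive (fn N) x = sum_n (fun n => - T (S k) (lam n) x) N).
  { intros. apply is_derive_unique. apply sumT_derive. }
  assert (HDf : (fun N x => Derive (fn N) x) = (fun N x => sum_n (fun n => - T (S k) (lam n) x) N)).
  { apply functional_extensionality; intros N. apply functional_extensionality; intros x. apply HD. }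
  pose proof (CVU_Derive fn (fun x => c < x) (open_gt c)) as H.
  assert (Hconn : is_connected (fun x => c < x)).
  { intros a b x Ha Hb' Hx. lra. }
  specialize (H Hconn).
  assert (HCVU : CVU_dom fn (fun x => c < x)).
  { apply (Mtest (fun n x => T k (lam n) x) (fun n => Kc k c * / Cmod (lam n))).
    - intros n x Hx. apply term_bound; lra.
    - apply ex_series_K. }
  specialize (H HCVU).
  assert (Hex : forall N x, c < x -> ex_derive (fn N) x).
  { intros. eexists. apply sumT_derive. }
  specialize (H Hex).
  assert (Hcont : forall N x, c < x -> continuity_pt (Derive (fn N)) x).
  { intros N x _. apply continuity_pt_ext with (fun x => sum_n (fun n => - T (S k) (lam n) x) N).
    intros; rewrite HD; auto.
    apply continuity_pt_filterlim.
    assert (Hd : ex_derive (fun x => sum_n (fun n => - T (S k) (lam n) x) N) x).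
    2: { pose proof (ex_derive_continuous _ _ Hd) as HH. exact HH. }
    eexists. apply (is_derive_sum_n (fun n y => - T (S k) (lam n) y)). intros.
    apply (is_derive_opp (fun y => T (S k) (lam k0) y)). apply T_derive, re_pos. }
  specialize (H Hcont).
  assert (HCVU2 : CVU_dom (fun N x => Derive (fn N) x) (fun x => c < x)).
  { rewrite HDf.
    apply (Mtest (fun n x => - T (S k) (lam n) x) (fun n => Kc (S k) c * / Cmod (lam n))).
    - intros n x Hx. rewrite Rabs_Ropp. apply term_bound; lra.
    - apply ex_series_K. }
  specialize (H HCVU2 t ltac:(unfold c; lra)).
  unfold G.
  replace (- Series (fun n => T (S k) (lam n) t)) with
    (real (Lim_seq (fun N => Derive (fn N) t))).
  - exact H.
  - rewrite (Lim_seq_ext _ (fun N => sum_n (fun n => - T (S k) (lam n) t) N)) by (intros; apply HD).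
    change (Series (fun n => - T (S k) (lam n) t) = - Series (fun n => T (S k) (lam n) t)).
    apply Series_opp.
Qed.

Lemma G_Derive_n k : forall t, 0 < t ->
  ex_derive_n (G lam 0) k t /\ Derive_n (G lam 0) k t = (-1) ^ k * G lam k t.
Proof.
  induction k as [|k IH]; intros t Ht.
  - split. exact I. simpl. ring.
  - assert (loc : locally t (fun y => Derive_n (G lam 0) k y = (-1) ^ k * G lam k y)).
    { apply (filter_imp (fun y => 0 < y)). intros y Hy. apply IH; auto.
      apply (open_gt 0 t Ht). }
    assert (Hd : is_derive (fun y => (-1) ^ k * G lam k y) t ((-1) ^ k * (- G lam (S k) t))).
    { apply is_derive_scal. apply G_derive; auto. }
    split.
    + change (ex_derive (Derive_n (G lam 0) k) t). apply (ex_derive_ext_loc (fun y => (-1) ^ k * G lam k y)).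
      apply (filter_imp _ _ (fun y H => eq_sym H) loc). eexists; exact Hd.
    + change (Derive (Derive_n (G lam 0) k) t = (-1) ^ (S k) * G lam (S k) t).
      rewrite (Derive_ext_loc _ (fun y => (-1) ^ k * G lam k y) t loc).
      replace ((-1) ^ S k * G lam (S k) t) with ((-1) ^ k * - G lam (S k) t) by (simpl; ring).
      apply (is_derive_unique _ _ _ Hd).
Qed.

Lemma phi_pos n tau : 0 < phi (lam n) tau.
Proof. unfold phi. apply Rmult_lt_0_compat. apply rho_pos. apply exp_pos. Qed.

Lemma phi_decay tau : 0 < tau -> is_lim_seq (fun n => / Cmod (lam n)) 0 ->
  forall e, 0 < e -> exists N, forall n, (N <= n)%nat -> phi (lam n) tau <= e.
Proof.
  intros Ht Hl e He.
  assert (HK : 0 < Kc 1 tau).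
  { unfold Kc. apply Rdiv_lt_0_compat. apply INR_fact_lt_0. apply pow_lt. nra. }
  apply is_lim_seq_spec in Hl.
  destruct (Hl (mkposreal (e / Kc 1 tau) ltac:(apply Rdiv_lt_0_compat; auto))) as [N HN].
  exists N. intros n Hn. specialize (HN n Hn). simpl in HN.
  rewrite Rminus_0_r in HN. pose proof (rho_pos n).
  rewrite Rabs_pos_eq in HN by (apply Rlt_le, Rinv_0_lt_compat; auto).
  pose proof (exp_dec_bound 1 tau tau n Ht (Rle_refl _)) as B.
  unfold phi. rewrite pow_1 in B. eapply Rle_trans. exact B.
  apply (Rmult_lt_compat_l (Kc 1 tau)) in HN; auto.
  replace (Kc 1 tau * (e / Kc 1 tau)) with e in HN by (field; lra). lra.
Qed.

Lemma ex_series_phi tau : 0 < tau -> ex_series (fun n => phi (lam n) tau).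
Proof.
  intros Ht. apply ex_series_Rabs.
  apply (@ex_series_le R_AbsRing R_CompleteNormedModule _ (fun n => Kc 1 tau * / Cmod (lam n))).
  - intros n. unfold norm; simpl. unfold abs; simpl. rewrite Rabs_Rabsolu.
    rewrite Rabs_pos_eq by (apply Rlt_le, phi_pos).
    pose proof (exp_dec_bound 1 tau tau n Ht (Rle_refl _)) as B. rewrite pow_1 in B. exact B.
  - apply ex_series_K.
Qed.

Lemma converse : (forall k x, 0 < x -> 0 <= G lam k x) -> forall n, Im (lam n) = 0.
Proof.
  intros HG n0. apply NNPP. intros Hbn0.
  pose proof (ex_series_lim_0 _ Hser) as Hlim.
  set (a0 := Re (lam n0)).
  assert (Ha0 : 0 < a0) by apply re_pos.
  set (tau0 := / a0).
  assert (Ht0 : 0 < tau0) by (apply Rinv_0_lt_compat; auto).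
  assert (Hreal : forall n, Im (lam n) = 0 -> phi (lam n) tau0 <= a0 * exp (-1)).
  { intros n Hn. pose proof (Cmod_sq (lam n)) as Hc. rewrite Hn in Hc.
    pose proof (re_pos n) as Ha. pose proof (rho_pos n) as Hr.
    assert (Cmod (lam n) = Re (lam n)) by nra.
    unfold phi. rewrite H.
    set (x := Re (lam n) / a0).
    pose proof (exp_ineq1_le (x - 1)) as E.
    replace (Re (lam n) * tau0) with x by (unfold x, tau0; field; lra).
    replace (Re (lam n)) with (a0 * x) at 1 by (unfold x; field; lra).
    assert (exp (-1) = exp (x - 1) * exp (- x)) by (rewrite <- exp_plus; f_equal; ring).
    rewrite H0. assert (0 < exp (- x)) by apply exp_pos.
    assert (0 <= x) by (unfold x; apply Rlt_le, Rdiv_lt_0_compat; auto).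
    rewrite <- Rmult_assoc. apply Rmult_le_compat_r. lra.
    apply Rmult_le_compat_l; lra. }
  assert (Hn0big : a0 * exp (-1) < phi (lam n0) tau0).
  { pose proof (Cmod_sq (lam n0)) as Hc. pose proof (rho_pos n0) as Hr.
    assert (0 < Im (lam n0) ^ 2) by (simpl; rewrite Rmult_1_r; apply Rsqr_pos_lt; auto).
    fold a0 in Hc.
    assert (a0 < Cmod (lam n0)) by nra.
    unfold phi. fold a0. replace (a0 * tau0) with 1 by (unfold tau0; field; lra).
    apply Rmult_lt_compat_r. apply exp_pos. auto. }
  pose proof (phi_pos n0 tau0) as Hp0.
  destruct (phi_decay tau0 Ht0 Hlim (phi (lam n0) tau0 / 2) ltac:(lra)) as [N HN].
  assert (Hn0N : (n0 < N)%nat).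
  { destruct (le_lt_dec N n0) as [h|h]; auto. specialize (HN n0 h). lra. }
  destruct (fin_argmax (fun _ => True) (fun n => phi (lam n) tau0) N ltac:(exists n0; auto))
    as [ns [HnsN [_ Hns]]].
  set (M0 := phi (lam ns) tau0).
  assert (HM0 : forall n, phi (lam n) tau0 <= M0).
  { intros n. destruct (le_lt_dec N n) as [h|h].
    - specialize (HN n h). specialize (Hns n0 Hn0N I). unfold M0. lra.
    - apply Hns; auto. }
  assert (Hn0M0 : phi (lam n0) tau0 <= M0) by apply HM0.
  set (P := fun n => phi (lam n) tau0 = M0).
  assert (HPN : forall n, P n -> (n < N)%nat).
  { intros n Hn. destruct (le_lt_dec N n) as [h|h]; auto. specialize (HN n h). unfold P in Hn. lra. }
  assert (HPim : forall n, P n -> Im (lam n) <> 0).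
  { intros n Hn Him. specialize (Hreal n Him). unfold P in Hn. lra. }
  destruct (fin_argmax P (fun n => - Re (lam n)) N ltac:(exists ns; split; auto; reflexivity))
    as [n1 [Hn1N [HPn1 Hn1min]]].
  set (a1 := Re (lam n1)). set (b1 := Im (lam n1)). set (rho1 := Cmod (lam n1)).
  assert (Ha1 : 0 < a1) by apply re_pos.
  assert (Hb1 : b1 <> 0) by (apply HPim; auto).
  assert (HM0pos : 0 < M0) by (unfold M0; apply phi_pos).
  destruct (fin_strict (fun n => ~ P n) (fun n => phi (lam n) tau0) M0 N) as [r2 [Hr2 Hr2b]].
  { intros n _ Hn. specialize (HM0 n). unfold P in Hn. lra. }
  set (r0 := Rmax r2 (M0 / 2)).
  assert (Hr0 : r0 < M0) by (unfold r0; apply Rmax_lub_lt; lra).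
  assert (Hr0b : forall n, ~ P n -> phi (lam n) tau0 <= r0).
  { intros n Hn. destruct (le_lt_dec N n) as [h|h].
    - specialize (HN n h). apply Rle_trans with (M0 / 2). lra. apply Rmax_r.
    - apply Rle_trans with r2. apply Hr2b; auto. apply Rmax_l. }
  set (eps := (M0 - r0) / (2 * M0 * a1)).
  assert (Heps : 0 < eps) by (unfold eps; apply Rdiv_lt_0_compat; [lra | nra]).
  set (alpha := atan (b1 / a1)).
  set (th := fun tau => alpha - b1 * tau).
  assert (Htau : exists tau D z, tau0 < tau < tau0 + eps /\ (0 < D)%nat /\
             th tau = PI * IZR (2 * z + 1) / INR D).
  { destruct (Rlt_or_le 0 b1) as [hb|hb].
    - destruct (odd_dense (th (tau0 + eps)) (th tau0)) as [D [z [HD [Hz1 Hz2]]]].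
      { unfold th. nra. }
      set (q := PI * IZR (2 * z + 1) / INR D) in *.
      exists ((alpha - q) / b1), D, z. split; [|split; auto].
      + unfold th in Hz1, Hz2. set (w := (alpha - q) / b1).
        assert (alpha - q = w * b1) by (unfold w; field; lra). split; nra.
      + unfold th. cbv beta. fold q. field. auto.
    - assert (hb' : b1 < 0) by lra.
      destruct (odd_dense (th tau0) (th (tau0 + eps))) as [D [z [HD [Hz1 Hz2]]]].
      { unfold th. nra. }
      set (q := PI * IZR (2 * z + 1) / INR D) in *.
      exists ((alpha - q) / b1), D, z. split; [|split; auto].
      + unfold th in Hz1, Hz2. set (w := (alpha - q) / b1).
        assert (alpha - q = w * b1) by (unfold w; field; lra). split; nra.
      + unfold th. cbv beta. fold q. field. auto. }
  destruct Htau as [tau [D [z [[Htau1 Htau2] [HD Hth]]]]].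
  assert (Htau : 0 < tau) by lra.
  set (M := phi (lam n1) tau).
  assert (HMshift : M = M0 * exp (- (a1 * (tau - tau0)))).
  { unfold M. rewrite (phi_shift _ tau0). fold a1. assert (E : phi (lam n1) tau0 = M0) by exact HPn1. rewrite E. reflexivity. }
  assert (HMr0 : r0 < M).
  { rewrite HMshift. pose proof (exp_ineq1_le (- (a1 * (tau - tau0)))).
    assert (a1 * (tau - tau0) < a1 * eps) by (apply Rmult_lt_compat_l; lra).
    assert (a1 * eps = (M0 - r0) / (2 * M0)) by (unfold eps; field; lra).
    assert (M0 * (1 + - (a1 * (tau - tau0))) > r0).
    { assert (M0 * (a1 * (tau - tau0)) < M0 * ((M0 - r0) / (2 * M0))) by
        (apply Rmult_lt_compat_l; lra).
      replace (M0 * ((M0 - r0) / (2 * M0))) with ((M0 - r0) / 2) in H2 by (field; lra). nra. }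
    nra. }
  assert (HMpos : 0 < M) by (unfold M; apply phi_pos).
  set (SS := fun n => P n /\ Re (lam n) = a1).
  destruct (fin_strict (fun n => P n /\ Re (lam n) <> a1) (fun n => phi (lam n) tau) M N)
    as [r3 [Hr3 Hr3b]].
  { intros n _ [HPn Han]. rewrite HMshift, (phi_shift _ tau0). rewrite HPn.
    apply Rmult_lt_compat_l; auto. apply exp_increasing.
    specialize (Hn1min n (HPN n HPn) HPn). fold a1 in Hn1min.
    assert (a1 < Re (lam n)) by lra.
    apply Ropp_lt_contravar. apply Rmult_lt_compat_r; lra. }
  set (Rb := Rmax (Rmax r0 r3) 0).
  assert (HR : Rb < M) by (unfold Rb; apply Rmax_lub_lt; [apply Rmax_lub_lt|]; lra).
  assert (HR0 : 0 <= Rb) by (unfold Rb; apply Rmax_r).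
  assert (HRb : forall n, ~ SS n -> phi (lam n) tau <= Rb).
  { intros n Hn. destruct (classic (P n)) as [HPn|HPn].
    - apply Rle_trans with r3. apply Hr3b. apply HPN; auto. split; auto.
      intros E. apply Hn. split; auto.
      unfold Rb. eapply Rle_trans; [|apply Rmax_l]. apply Rmax_r.
    - apply Rle_trans with r0.
      + apply Rle_trans with (phi (lam n) tau0); [|apply Hr0b; auto].
        rewrite (phi_shift _ tau0). rewrite <- Rmult_1_r.
        apply Rmult_le_compat_l. apply Rlt_le, phi_pos.
        rewrite <- exp_0. apply exp_le_exp. pose proof (re_pos n). nra.
      + unfold Rb. eapply Rle_trans; [|apply Rmax_l]. apply Rmax_l. }
  assert (HRM : Rabs (Rb / M) < 1).
  { rewrite Rabs_pos_eq by (apply Rmult_le_pos; [lra | apply Rlt_le, Rinv_0_lt_compat; lra]).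
    unfold Rdiv. apply (Rmult_lt_reg_r M); auto.
    rewrite Rmult_assoc, Rinv_l, Rmult_1_r, Rmult_1_l by lra. lra. }
  set (Phi := Series (fun n => phi (lam n) tau)).
  assert (HPhi : 0 <= Phi).
  { rewrite <- Series_zero. apply Series_le. intros n. split. lra. apply Rlt_le, phi_pos.
    apply ex_series_phi; auto. }
  destruct (pow_lt_1_zero (Rb / M) HRM (M / (Phi + 1)) ltac:(apply Rdiv_lt_0_compat; lra))
    as [J HJ].
  set (k := (D * (2 * J + 1))%nat).
  assert (Hk1 : (1 <= k)%nat) by (unfold k; nia).
  assert (HkJ : (J <= k - 1)%nat) by (unfold k; nia).
  set (j := (k - 1)%nat).
  assert (Hkj : k = S j) by (unfold j; lia).
  set (t := INR k * tau).
  assert (Ht : 0 < t).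
  { unfold t. apply Rmult_lt_0_compat; auto. apply lt_0_INR. lia. }
  specialize (HG k t Ht). unfold G in HG.
  assert (HTS : forall n, SS n -> T k (lam n) t = - M ^ k).
  { intros n [HPn Han].
    assert (Hrho : Cmod (lam n) = rho1).
    { assert (E1 : phi (lam n) tau0 = M0) by exact HPn.
      assert (E2 : phi (lam n1) tau0 = M0) by exact HPn1.
      unfold phi in E1, E2. rewrite Han in E1. fold a1 rho1 in E2.
      apply (Rmult_eq_reg_r (exp (- (a1 * tau0)))). lra. apply Rgt_not_eq, exp_pos. }
    assert (Him : Im (lam n) = b1 \/ Im (lam n) = - b1).
    { pose proof (Cmod_sq (lam n)) as C1. pose proof (Cmod_sq (lam n1)) as C2.
      rewrite Hrho, Han in C1. fold a1 b1 rho1 in C2.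
      assert ((Im (lam n) - b1) * (Im (lam n) + b1) = 0) by nra.
      destruct (Rmult_integral _ _ H) as [h|h]; [left|right]; lra. }
    assert (Hq : INR k * (PI * IZR (2 * z + 1) / INR D) =
                 IZR (2 * (2 * z * Z.of_nat J + z + Z.of_nat J) + 1) * PI).
    { assert (INR D <> 0) by (apply not_0_INR; lia).
      replace (INR k) with (INR D * (2 * IZR (Z.of_nat J) + 1)).
      2: { unfold k. rewrite mult_INR, plus_INR, mult_INR, <- INR_IZR_INZ. simpl. ring. }
      repeat rewrite ?plus_IZR, ?mult_IZR. field. auto. }
    unfold T. rewrite Han, Hrho.
    replace (rho1 ^ k * exp (- (a1 * t))) with (M ^ k).
    2: { unfold M, t. rewrite <- phi_pow. reflexivity. }
    replace (cos (INR k * atan (Im (lam n) / a1) - Im (lam n) * t)) with (-1). ring.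
    unfold th in Hth. fold alpha in Hth.
    destruct Him as [h|h]; rewrite h.
    - replace (INR k * atan (b1 / a1) - b1 * t) with (INR k * (alpha - b1 * tau))
        by (unfold t, alpha; ring).
      rewrite Hth, Hq. symmetry. apply cos_odd.
    - replace (- b1 / a1) with (- (b1 / a1)) by (field; lra). rewrite atan_opp.
      replace (INR k * - atan (b1 / a1) - - b1 * t) with (- (INR k * (alpha - b1 * tau)))
        by (unfold t, alpha; ring).
      rewrite cos_neg, Hth, Hq. symmetry. apply cos_odd. }
  set (v := fun n => (if Nat.eq_dec n n1 then - M ^ k else 0) + Rb ^ j * phi (lam n) tau).
  assert (HMk : 0 < M ^ k) by (apply pow_lt; auto).
  assert (HRj : 0 <= Rb ^ j) by (apply pow_le; auto).
  assert (Hv : forall n, T k (lam n) t <= v n).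
  { intros n. pose proof (phi_pos n tau) as Hpn.
    assert (0 <= Rb ^ j * phi (lam n) tau) by (apply Rmult_le_pos; lra).
    destruct (classic (SS n)) as [HS|HS].
    - rewrite (HTS n HS). unfold v. destruct (Nat.eq_dec n n1); lra.
    - unfold v. destruct (Nat.eq_dec n n1) as [e|e].
      { exfalso. apply HS. subst n. split. exact HPn1. reflexivity. }
      rewrite Rplus_0_l.
      eapply Rle_trans. apply Rle_abs. eapply Rle_trans. apply T_bound.
      unfold t. rewrite phi_pow. rewrite Hkj. simpl pow.
      rewrite Rmult_comm. apply Rmult_le_compat_r. lra.
      apply pow_incr. split. lra. apply HRb; auto. }
  assert (Hexv1 : is_series (fun n => if Nat.eq_dec n n1 then - M ^ k else 0) (- M ^ k))
    by apply is_series_ind.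
  assert (Hexv2 : ex_series (fun n => Rb ^ j * phi (lam n) tau)).
  { apply (ex_series_scal_l (Rb ^ j) _ (ex_series_phi tau Htau)). }
  assert (Hexv : ex_series v).
  { unfold v. apply (ex_series_plus _ _ (ex_intro _ _ Hexv1) Hexv2). }
  assert (HSv : Series v = - M ^ k + Rb ^ j * Phi).
  { unfold v. rewrite Series_plus.
    replace (Series (fun n : nat => if Nat.eq_dec n n1 then - M ^ k else 0)) with (- M ^ k)
      by (symmetry; apply is_series_unique; exact Hexv1).
    rewrite Series_scal_l. reflexivity. exists (- M ^ k); auto. auto. }
  assert (HexT : ex_series (fun n => T k (lam n) t)) by (apply ex_series_T; auto).
  assert (Hle : Series (fun n => T k (lam n) t) <= Series v).
  { assert (0 <= Series (fun n => v n - T k (lam n) t)).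
    { rewrite <- Series_zero. apply Series_le.
      intros n. specialize (Hv n). lra.
      apply (ex_series_minus v (fun n => T k (lam n) t)); auto. }
    rewrite Series_minus in H; auto. lra. }
  assert (Hneg : - M ^ k + Rb ^ j * Phi < 0).
  { specialize (HJ j HkJ).
    assert (Hpj : 0 <= (Rb / M) ^ j) by (apply pow_le; apply Rmult_le_pos; [lra | apply Rlt_le, Rinv_0_lt_compat; lra]).
    rewrite Rabs_pos_eq in HJ by auto.
    assert (Rb ^ j = (Rb / M) ^ j * M ^ j).
    { rewrite <- Rpow_mult_distr. f_equal. field. lra. }
    rewrite H, Hkj. simpl pow.
    assert (HMj : 0 < M ^ j) by (apply pow_lt; auto).
    assert ((Rb / M) ^ j * Phi <= M / (Phi + 1) * Phi) by (apply Rmult_le_compat_r; lra).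
    assert (M / (Phi + 1) * Phi < M).
    { apply (Rmult_lt_reg_r (Phi + 1)). lra.
      replace (M / (Phi + 1) * Phi * (Phi + 1)) with (M * Phi) by (field; lra). nra. }
    assert ((Rb / M) ^ j * Phi < M) by lra.
    replace ((Rb / M) ^ j * M ^ j * Phi) with (M ^ j * ((Rb / M) ^ j * Phi)) by ring.
    assert (M ^ j * ((Rb / M) ^ j * Phi) < M ^ j * M) by (apply Rmult_lt_compat_l; auto).
    lra. }
  lra.
Qed.

End Lam.

Lemma Theta_re (lam : nat -> C) t : Re (Theta lam t) = G lam 0 t.
Proof.
  unfold Theta, G. simpl. apply Series_ext. intros n.
  unfold cexp, T. destruct (lam n) as [a b]. unfold Re, Im; simpl.
  replace (- (a * t - b * 0)) with (- (a * t)) by ring.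
  replace (- (a * 0 + b * t)) with (0 * atan (b / a) - b * t) by ring. ring.
Qed.

Theorem lemma3 (a : nat -> C) (f : C -> C) (lam : nat -> C) :
  (* f is entire, given by its everywhere convergent Taylor series *)
  (forall z : C, is_series (fun n => Cmult (a n) (pow_n z n)) (f z)) ->
  (* a_0 * a_n > 0 for all n >= 0 *)
  (forall n : nat, Im (Cmult (a 0%nat) (a n)) = 0 /\ 0 < Re (Cmult (a 0%nat) (a n))) ->
  (* order rho(f) = limsup n log n / (- log |a_n|) < 1 *)
  Rbar_lt (LimSup_seq (fun n => INR n * ln (INR n) / (- ln (Cmod (a n))))) 1 ->
  (* f has a nonzero root *)
  (exists z : C, z <> RtoC 0 /\ f z = RtoC 0) ->
  (* Hadamard product: f(z)/f(0) = prod_n (1 + z / lam_n), sum 1/|lam_n| < oo *)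
  (forall z : C,
     filterlim (part_prod lam z) eventually (locally (Cdiv (f z) (f (RtoC 0))))) ->
  ex_series (fun n => / Cmod (lam n)) ->
  (* Re lam_n >= beta0 |lam_n| > 0 for some beta0 in (0,1) *)
  (exists beta0 : R, 0 < beta0 < 1 /\
     forall n : nat, beta0 * Cmod (lam n) <= Re (lam n) /\ 0 < beta0 * Cmod (lam n)) ->
  ((forall n : nat, Im (lam n) = 0 /\ 0 < Re (lam n)) <->
   completely_monotonic_C (Theta lam)).
Proof.
  intros Ha Hf Hord Hroot Hprod Hser [b0 [[Hb0 Hb01] Hb]].
  pose proof (G_Derive_n lam b0 Hb0 Hb Hser) as HG.
  assert (Hre : (fun x => Re (Theta lam x)) = G lam 0).
  { apply functional_extensionality; intros; apply Theta_re. }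
  split.
  - intros Hreal. split.
    + intros x Hx. unfold Theta. simpl.
      rewrite (Series_ext _ (fun _ => 0)). apply Series_zero.
      intros n. unfold cexp. simpl. destruct (Hreal n) as [Him _]. unfold Im in Him.
      rewrite Him. replace (- (fst (lam n) * 0 + 0 * x)) with 0 by ring.
      rewrite sin_0. ring.
    + unfold completely_monotonic. rewrite Hre. split.
      * intros k x Hx. apply (HG k x Hx).
      * intros k x Hx. destruct (HG k x Hx) as [_ E]. rewrite E.
        rewrite <- Rmult_assoc, <- Rpow_mult_distr.
        replace (-1 * -1) with 1 by ring. rewrite pow1, Rmult_1_l.
        unfold G. rewrite <- Series_zero. apply Series_le.
        2: apply (ex_series_T lam b0 Hb0 Hb Hser); auto.
        intros n. split. lra.
        unfold T. destruct (Hreal n) as [Him Hre'].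
        rewrite Him. replace (0 / Re (lam n)) with 0 by (field; lra). rewrite atan_0.
        replace (INR k * 0 - 0 * x) with 0 by ring. rewrite cos_0, Rmult_1_r.
        apply Rmult_le_pos; [apply pow_le, Cmod_ge_0 | apply Rlt_le, exp_pos].
  - intros [_ HCM]. unfold completely_monotonic in HCM. rewrite Hre in HCM.
    destruct HCM as [_ Hnn].
    intros n. split; [|apply (re_pos lam b0 Hb n)].
    apply (converse lam b0 Hb0 Hb Hser); auto.
    intros k x Hx. specialize (Hnn k x Hx). destruct (HG k x Hx) as [_ E].
    rewrite E in Hnn. rewrite <- Rmult_assoc, <- Rpow_mult_distr in Hnn.
    replace (-1 * -1) with 1 in Hnn by ring. rewrite pow1, Rmult_1_l in Hnn. exact Hnn.
Qed.
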